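(* Let $0<m\le L$, $\kappa=L/m$, and consider the accelerated gradient flow dynamics with $\alpha=1/L$ and constant parameters $(\beta,\gamma)$. The optimal (largest) exponential convergence rate achievable for all $f\in\mathcal{Q}_m^L$ is $\rho=1/\sqrt\kappa$, and the corresponding parameters are $\beta=1+(v-2)/\sqrt\kappa$, $\gamma=v\sqrt\kappa$, where $v\in[0,1]$. This rate is achieved by the heavy-ball dynamics ($\gamma=0$) with $v=0$ and, for $\kappa\ge4$, by Nesterov's dynamics ($\gamma=\beta$) with $v=(\sqrt\kappa-2)/(\kappa-1)$.
   Context: $\mathcal{Q}_m^L$ is the class of quadratic functions $f(x)=\tfrac12x^TQx-q^Tx$ on $\mathbb{R}^n$ with $q\in\mathbb{R}^n$, $Q=Q^T\succ0$ whose largest eigenvalue is $L$ and smallest is $m$; $x^\star$ is the minimizer. The (noiseless) accelerated gradient flow dynamics is $\ddot x+\theta\dot x+\alpha\nabla f(x+\gamma\dot x)=0$ with $\theta=1-\beta$; with $\psi=[(x-x^\star)^T,\dot x^T]^T$ this is $\dot\psi=A\psi$, $A=\begin{bmatrix}0&I\\-\alpha Q&-(\theta I+\gamma\alpha Q)\end{bmatrix}$. It is exponentially stable with rate $\rho>0$ for all $f\in\mathcal{Q}_m^L$ if, for every $f\in\mathcal{Q}_m^L$, all eigenvalues of $A$ have real part at most $-\rho$. *)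

(* Defs.v *)
From HB Require Import structures.
From mathcomp Require Import all_boot all_order all_algebra.
From mathcomp Require Import reals.
From mathcomp Require Import complex.

Set Implicit Arguments.
Unset Strict Implicit.
Unset Printing Implicit Defensive.

Import Order.TTheory GRing.Theory Num.Theory.
Local Open Scope ring_scope.

Definition sym_posdef (R : realType) (n : nat) (Q : 'M[R]_n) : Prop :=
  Q^T = Q /\ (forall x : 'cV[R]_n, x != 0 -> 0 < (x^T *m Q *m x) 0 0).

(* The Hessians Q of functions f(x) = 1/2 x^T Q x - q^T x in the class Q_m^L:
   Q symmetric positive definite, largest eigenvalue L, smallest eigenvalue m.
   (The linear term q does not enter the dynamics matrix A.) *)
Definition in_QmL (R : realType) (n : nat) (m L : R) (Q : 'M[R]_n) : Prop :=
  sym_posdef Q /\ eigenvalue Q L /\ eigenvalue Q m /\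
  (forall a : R, eigenvalue Q a -> m <= a <= L).

Definition AGF_matrix (R : realType) (n : nat) (alpha beta gamma : R)
  (Q : 'M[R]_n) : 'M[R]_(n + n) :=
  block_mx 0 1%:M (- (alpha *: Q))
    (- ((1 - beta) *: 1%:M + (gamma * alpha) *: Q)).

Definition cmx (R : realType) (p : nat) (A : 'M[R]_p) : 'M[R[i]]_p :=
  map_mx (fun x : R => Complex x 0) A.

Definition AGF_exp_stable (R : realType) (n : nat) (m L : R)
  (alpha beta gamma rho : R) : Prop :=
  0 < rho /\
  forall Q : 'M[R]_n, in_QmL m L Q ->
    forall z : R[i], eigenvalue (cmx (AGF_matrix alpha beta gamma Q)) z ->
      complex.Re z <= - rho.

(* Main.v *)
Require Import Defs.
From HB Require Import structures.
From mathcomp Require Import all_boot all_order all_algebra.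
From mathcomp Require Import reals.
From mathcomp Require Import complex.
From mathcomp Require Import ring lra.
Import Order.TTheory GRing.Theory Num.Theory.
Local Open Scope ring_scope.
Local Open Scope complex_scope.

Lemma quad_re (R : realType) (x y b c rho : R) : 0 < rho -> 2*rho <= b ->
  0 <= rho^+2 - b*rho + c -> x^+2 - y^+2 + b*x + c = 0 -> 2*x*y + b*y = 0 ->
  x <= -rho.
Proof.
move=> r0 hb hp e1 e2.
have : (2*x + b) * y = 0 by rewrite -e2; ring.
move/eqP; rewrite mulf_eq0 => /orP[/eqP h|/eqP y0]; first by lra.
rewrite y0 in e1.
rewrite leNgt; apply/negP => hx.
have h1 : (x + rho) * (x - rho + b) = (x ^+ 2 - 0 ^+ 2 + b * x + c) - (rho^+2 - b*rho + c) by ring.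
rewrite e1 in h1.
have : 0 < (x + rho) * (x - rho + b) by apply: mulr_gt0; lra.
lra.
Qed.

Lemma quad_nec (R : realType) (b c rho : R) : 0 < rho -> 0 < c ->
  (forall x y : R, x^+2 - y^+2 + b*x + c = 0 -> 2*x*y + b*y = 0 -> x <= -rho) ->
  rho^+2 <= c /\ 2*rho <= b /\ 0 <= rho^+2 - b*rho + c.
Proof.
move=> r0 c0 H.
have [hD|hD] := lerP 0 (b^+2 - 4*c).
- set d := Num.sqrt (b^+2 - 4*c).
  have hd : d^+2 = b^+2 - 4*c by rewrite sqr_sqrtr.
  have d0 : 0 <= d by apply: sqrtr_ge0.
  have h1 : (-b + d)/2 <= -rho.
    apply: (H _ 0); last by ring.
    have -> : ((- b + d) / 2) ^+ 2 - 0^+2 + b * ((- b + d) / 2) + c = (d^+2 - (b^+2 - 4*c))/4 by field.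
    by rewrite hd subrr mul0r.
  have h2 : (-b - d)/2 <= -rho.
    apply: (H _ 0); last by ring.
    have -> : ((- b - d) / 2) ^+ 2 - 0^+2 + b * ((- b - d) / 2) + c = (d^+2 - (b^+2 - 4*c))/4 by field.
    by rewrite hd subrr mul0r.
  nra.
- set d := Num.sqrt (4*c - b^+2).
  have hd : d^+2 = 4*c - b^+2 by rewrite sqr_sqrtr; lra.
  have h1 : -b/2 <= -rho.
    apply: (H _ (d/2)); last by field.
    have -> : (- b / 2) ^+ 2 - (d / 2) ^+ 2 + b * (- b / 2) + c = (4*c - b^+2 - d^+2)/4 by field.
    by rewrite hd subrr mul0r.
  nra.
Qed.
Lemma cmxE (R : realType) p (A : 'M[R]_p) : cmx A = map_mx (real_complex R) A.
Proof. by []. Qed.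

Lemma eig_fwd (R: realType) n (Q : 'M[R]_n) (a be g lam : R) (z : R[i]) :
  eigenvalue Q lam -> a * lam != 0 ->
  z^+2 + ((1 - be) + g*a*lam)%:C * z + (a*lam)%:C = 0 ->
  eigenvalue (cmx (AGF_matrix a be g Q)) z.
Proof.
case/eigenvalueP => x xQ x0 al0 ez.
set f := real_complex R.
have z0 : z != 0.
  apply/negP => /eqP z0; move: ez; rewrite z0 expr0n /= mulr0 !add0r => /eqP.
  by rewrite /f (inj_eq (@complexI _)) (negbTE al0).
set xc := map_mx f x.
have xcQ : xc *m map_mx f Q = f lam *: xc by rewrite -map_mxM xQ map_mxZ.
have xc0 : xc != 0 by rewrite map_mx_eq0.
set c := - f (a*lam) / z.
apply/eigenvalueP; exists (row_mx (c *: xc) xc); last first.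
  by apply: contraNneq xc0; rewrite -row_mx0 => /eq_row_mx[_ ->].
rewrite cmxE /AGF_matrix map_block_mx mul_row_block map_mx0 map_mx1 !map_mxN
  map_mxD map_mxZ map_mxZ map_mx1 mulmx0 add0r mulmx1 scale_row_mx.
rewrite !mulmxN mulmxDr map_mxZ -!scalemxAr xcQ mulmx1 scalerA.
rewrite !scalerA -scaleNr -scalerDl -scalerBl; congr row_mx; congr (_ *: _).
- by rewrite /c mulrCA mulfV // mulr1 /f rmorphM.
- rewrite /c; apply: (mulIf z0); rewrite mulrBl mulrDl -mulrA mulVf // mulr1.
  apply/eqP; rewrite -subr_eq0; apply/eqP; rewrite -[RHS]oppr0 -ez !rmorphM !rmorphD /=.
  ring.
Qed.

Lemma cmx_conj (R : realType) p (Q : 'M[R]_p) : map_mx conjc (cmx Q) = cmx Q.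
Proof. by apply/matrixP => i j; rewrite !mxE conjc_real. Qed.

Lemma herm_real (R : realType) n (Q : 'M[R]_n) (w : 'rV[R[i]]_n) (l : R[i]) :
  Q^T = Q -> w != 0 -> w *m cmx Q = l *: w -> l^* = l.
Proof.
move=> QT w0 wQ.
set wc := map_mx conjc w.
have h1 : w *m cmx Q *m wc^T = l *: (w *m wc^T) by rewrite wQ -scalemxAl.
have h2 : w *m cmx Q *m wc^T = l^* *: (w *m wc^T).
  rewrite -mulmxA -{1}QT cmxE -map_trmx -trmx_mul -cmxE.
  have -> : wc *m cmx Q = map_mx conjc (w *m cmx Q).
    by rewrite map_mxM cmx_conj.
  by rewrite wQ map_mxZ -/wc linearZ /= -scalemxAr.
have N0 : (w *m wc^T) 0 0 != 0.
  have [j wj] : exists j, w 0 j != 0.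
    apply/existsP; apply: contraNT w0; rewrite negb_exists => /forallP H.
    by apply/eqP/rowP => j; rewrite mxE; apply/eqP; move: (H j); rewrite negbK.
  rewrite mxE (bigD1 j) //= !mxE.
  apply: lt0r_neq0; apply: ltr_pwDl.
    rewrite lt_def mulf_neq0 ?conjc_eq0 //; exact: mulcJ_ge0.
  by apply: sumr_ge0 => k _; rewrite !mxE; exact: mulcJ_ge0.
have := congr1 (fun M : 'M[R[i]]_1 => M 0 0) (etrans (esym h1) h2).
rewrite /= [in X in X -> _]mxE [in X in _ = X -> _]mxE => h.
by apply: (mulIf N0); rewrite -h.
Qed.

Lemma eig_bwd (R : realType) n (Q : 'M[R]_n) (a be g : R) (z : R[i]) :
  Q^T = Q -> a != 0 -> eigenvalue (cmx (AGF_matrix a be g Q)) z ->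
  (1 + g%:C * z = 0 /\ z^+2 + (1-be)%:C * z = 0) \/
  exists lam, eigenvalue Q lam /\
    z^+2 + ((1 - be) + g*a*lam)%:C * z + (a*lam)%:C = 0.
Proof.
move=> QT a0 /eigenvalueP [v vA v0].
set f := real_complex R.
rewrite -(hsubmxK v) in vA v0.
move: vA v0; set u := lsubmx v; set w := rsubmx v => vA v0.
set P := w *m map_mx f Q.
move: vA; rewrite cmxE /AGF_matrix map_block_mx mul_row_block map_mx0 map_mx1 !map_mxN
  map_mxD !map_mxZ map_mx1 mulmx0 add0r mulmx1 scale_row_mx.
rewrite !mulmxN mulmxDr -!scalemxAr mulmx1 -/P => /eq_row_mx [e1 e2].
have w0 : w != 0.
  apply: contraNneq v0 => w0; move: e2; rewrite /P w0.
  rewrite !(scaler0, mul0mx, addr0, oppr0, subr0) => ->; by rewrite row_mx0.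
have eu : u = z *: w + f (1 - be) *: w + f (g * a) *: P.
  by rewrite -e2 -addrA subrK.
have e3 : (- f a * (1 + f g * z)) *: P = (z^+2 + f (1 - be) * z) *: w.
  rewrite eu !scalerDr !scalerA in e1.
  have -> : (- f a * (1 + f g * z)) *: P = -(f a *: P) - (z * f (g * a)) *: P.
    rewrite mulrDr mulr1 scalerDl scaleNr; congr (_ + _); rewrite -scaleNr.
    by congr (_ *: _); rewrite /f rmorphM; ring.
  by rewrite e1 addrK scalerDl expr2 [f (1 - be) * z]mulrC.
have fa0 : f a != 0 by rewrite fmorph_eq0.
have [h0|h0] := eqVneq (1 + f g * z) 0.
  left; split => //; move: e3; rewrite h0 mulr0 scale0r => /esym /eqP.
  by rewrite scaler_eq0 (negbTE w0) orbF => /eqP.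
right.
set c := - f a * (1 + f g * z).
have c0 : c != 0 by rewrite mulf_neq0 ?oppr_eq0.
set lamc := (z^+2 + f (1 - be) * z) / c.
have hP : w *m cmx Q = lamc *: w.
  by rewrite cmxE -/P -[P](scalerK c0) e3 scalerA mulrC.
have hr := @herm_real _ _ _ _ _ QT w0 hP.
have hl : lamc * c = z^+2 + f (1 - be) * z by rewrite /lamc mulfVK.
move: lamc hr hP hl => [x y] hr hP hl.
have y0 : y = 0.
  by move: hr => [] /eqP; rewrite eq_sym -subr_eq0 opprK -mulr2n mulrn_eq0 /= => /eqP.
rewrite y0 in hP hl.
change (f x * c = z ^+ 2 + f (1 - be) * z) in hl.
exists x; split.
  rewrite -(eigenvalue_map f); apply/eigenvalueP; exists w => //.

rewrite /f rmorphD !rmorphM -/f.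
transitivity (z^+2 + f (1-be) * z - f x * c); first by rewrite /c; ring.
by rewrite hl subrr.
Qed.

Lemma diag_eig (R : realType) n (d : 'rV[R]_n) k : eigenvalue (diag_mx d) (d 0 k).
Proof.
apply/eigenvalueP; exists (delta_mx 0 k).
  apply/rowP => j; rewrite mul_mx_diag !mxE.
  rewrite eqxx /=; have [->|] := eqVneq j k; by rewrite ?mulr1 ?mul1r ?mulr0 ?mul0r.
by apply/eqP => /matrixP /(_ 0 k); rewrite !mxE !eqxx /= => /eqP; rewrite oner_eq0.
Qed.

Lemma diag_eig_inv (R : realType) n (d : 'rV[R]_n) a :
  eigenvalue (diag_mx d) a -> exists k, a = d 0 k.
Proof.
case/eigenvalueP => v vd v0.
have [j vj] : exists j, v 0 j != 0.
  apply/existsP; apply: contraNT v0; rewrite negb_exists => /forallP H.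
  by apply/eqP/rowP => j; rewrite mxE; apply/eqP; move: (H j); rewrite negbK.
exists j; move/rowP: vd => /(_ j); rewrite mul_mx_diag !mxE => h.
by apply: (mulfI vj); rewrite h mulrC.
Qed.

Lemma exists_Q (R : realType) n (m L : R) : 0 < m -> m <= L -> (0 < n)%N ->
  (m < L -> (1 < n)%N) -> exists Q : 'M[R]_n, in_QmL m L Q.
Proof.
move=> m0 mL; case: n => [//|n'] _ hn.
pose d : 'rV[R]_n'.+1 := \row_i (if i == ord0 then L else m).
have dmL : forall k, m <= d 0 k <= L.
  by move=> k; rewrite mxE; case: ifP => _; rewrite ?lexx ?mL.
exists (diag_mx d); split; [split|split; [|split]].
- exact: tr_diag_mx.
- move=> x x0.
  have [j xj] : exists j, x j 0 != 0.
    apply/existsP; apply: contraNT x0; rewrite negb_exists => /forallP H.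
    by apply/eqP/colP => j; rewrite mxE; apply/eqP; move: (H j); rewrite negbK.
  rewrite mxE (bigD1 j) //= mul_mx_diag !mxE.
  apply: ltr_pwDl.
    have := dmL j; rewrite mxE => /andP[h _].
    rewrite mulrAC -expr2; apply: mulr_gt0; last exact: (lt_le_trans m0 h).
    by rewrite lt_def sqrf_eq0 xj sqr_ge0.
  apply: sumr_ge0 => k _; rewrite !mxE.
  have := dmL k; rewrite mxE => /andP[h _].
  by rewrite mulrAC -expr2 mulr_ge0 // ?sqr_ge0 // (le_trans (ltW m0) h).
- have -> : L = d 0 ord0 by rewrite mxE eqxx.
  exact: diag_eig.
- have [mLe|mL'] := eqVneq m L.
    have -> : m = d 0 ord0 by rewrite mxE eqxx.
    exact: diag_eig.
  have h1 : (1 < n'.+1)%N by apply: hn; rewrite lt_def eq_sym mL' mL.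
  have -> : m = d 0 (Ordinal h1) by rewrite mxE.
  exact: diag_eig.
- by move=> a /diag_eig_inv [k ->].
Qed.

Lemma quadC (R : realType) (x y b c : R) :
  (Complex x y)^+2 + (Complex b 0) * (Complex x y) + Complex c 0 =
  Complex (x^+2 - y^+2 + b*x + c) (2*x*y + b*y).
Proof. rewrite expr2 /=. congr Complex; ring. Qed.

Lemma complex_eq0 (R : realType) (a b : R) : Complex a b = 0 -> a = 0 /\ b = 0.
Proof. by move/eqP; rewrite eq_complex /= => /andP[/eqP h1 /eqP h2]. Qed.

Lemma linC (R : realType) (g x y : R) :
  1 + (Complex g 0) * (Complex x y) = Complex (1 + g*x) (g*y).
Proof. rewrite /=; congr Complex; ring. Qed.

Lemma nec_at (R : realType) n (m L al be ga rho : R) (Q : 'M[R]_n) lam :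
  AGF_exp_stable n m L al be ga rho -> in_QmL m L Q -> eigenvalue Q lam ->
  0 < al * lam ->
  rho^+2 <= al*lam /\ 2*rho <= (1-be) + ga*al*lam /\
  0 <= rho^+2 - ((1-be) + ga*al*lam)*rho + al*lam.
Proof.
move=> [r0 H] hQ el hal.
apply: quad_nec => // x y e1 e2.
have ez : (Complex x y)^+2 + ((1 - be) + ga*al*lam)%:C * Complex x y + (al*lam)%:C = 0.
  by rewrite quadC e1 e2.
have := H Q hQ (Complex x y) (@eig_fwd _ _ _ _ _ _ _ _ el (lt0r_neq0 hal) ez).
done.
Qed.

Lemma suff_stable (R : realType) n (m L al be ga rho : R) : 0 < rho -> al != 0 ->
  (forall lam, m <= lam <= L -> 2*rho <= (1-be) + ga*al*lam /\
     0 <= rho^+2 - ((1-be) + ga*al*lam)*rho + al*lam) ->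
  (forall x y : R, 1 + ga * x = 0 -> ga * y = 0 -> x <= -rho) ->
  AGF_exp_stable n m L al be ga rho.
Proof.
move=> r0 al0 Hl Hd; split => // Q [[QT _] [_ [_ Hb]]] [x y] ez.
case: (@eig_bwd _ _ _ _ _ _ _ QT al0 ez) => [[h1 h2]|[lam [el eq]]].
  have [e1 e2] := @complex_eq0 R _ _ (etrans (esym (@linC R ga x y)) h1).
  exact: (Hd x y e1 e2).
have [hb hp] := Hl lam (Hb lam el).
have [e1 e2] := @complex_eq0 R _ _ (etrans (esym (@quadC R x y _ _)) eq).
by rewrite /=; apply: quad_re hb hp e1 e2.
Qed.

Arguments nec_at {R n m L al be ga rho Q lam}.
Arguments exists_Q {R n m L}.

Local Close Scope complex_scope.

Theorem proposition5 (R : realType) (n : nat) (m L : R) :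
  0 < m -> m <= L -> (0 < n)%N -> (m < L -> (1 < n)%N) ->
  let kappa := L / m in
  let alpha := 1 / L in
  (* optimality: no constant (beta, gamma) gives a larger rate *)
  (forall beta gamma rho : R,
      AGF_exp_stable n m L alpha beta gamma rho ->
      rho <= 1 / Num.sqrt kappa) /\
  (* the family beta = 1 + (v-2)/sqrt kappa, gamma = v sqrt kappa, v in [0,1],
     achieves the rate 1/sqrt kappa *)
  (forall v : R, 0 <= v <= 1 ->
      AGF_exp_stable n m L alpha (1 + (v - 2) / Num.sqrt kappa)
        (v * Num.sqrt kappa) (1 / Num.sqrt kappa)) /\
  (* and (when kappa > 1) these are the only parameters achieving it *)
  (m < L -> forall beta gamma : R,
      AGF_exp_stable n m L alpha beta gamma (1 / Num.sqrt kappa) ->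
      exists v : R, 0 <= v <= 1 /\
        beta = 1 + (v - 2) / Num.sqrt kappa /\ gamma = v * Num.sqrt kappa) /\
  (* heavy-ball (gamma = 0, v = 0) *)
  AGF_exp_stable n m L alpha (1 + (0 - 2) / Num.sqrt kappa) 0
    (1 / Num.sqrt kappa) /\
  (* Nesterov (gamma = beta) for kappa >= 4 *)
  (4 <= kappa ->
    let v := (Num.sqrt kappa - 2) / (kappa - 1) in
    let beta := 1 + (v - 2) / Num.sqrt kappa in
    0 <= v <= 1 /\ v * Num.sqrt kappa = beta /\
    AGF_exp_stable n m L alpha beta beta (1 / Num.sqrt kappa)).
Proof.
move=> m0 mL n0 hn kappa alpha.
have L0 : 0 < L by exact: lt_le_trans m0 mL.
have k1 : 1 <= kappa by rewrite /kappa ler_pdivlMr // mul1r.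
have k0 : 0 < kappa by exact: lt_le_trans ltr01 k1.
set s := Num.sqrt kappa.
have ss : s ^+ 2 = kappa by rewrite sqr_sqrtr // ltW.
have s0 : 0 < s by rewrite sqrtr_gt0.
have s1 : 1 <= s by nra.
set t := 1 / s.
have t0 : 0 < t by rewrite divr_gt0.
have ts : t * s = 1 by rewrite /t mul1r mulVf // lt0r_neq0.
have divs : forall x, x / s = x * t by move=> x; rewrite /t mul1r.
have tt : t ^+ 2 = m / L.
  by rewrite /t expr_div_n ss /kappa expr1n div1r invf_div.
have al0 : alpha != 0 by rewrite /alpha div1r invr_neq0 // lt0r_neq0.
have alE : forall lam, alpha * lam = lam / L by move=> lam; rewrite /alpha mul1r mulrC.
have [Q hQ] := exists_Q m0 mL n0 hn.
have eQm : eigenvalue Q m by case: hQ => _ [_ [h _]].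
have eQL : eigenvalue Q L by case: hQ => _ [h _].
have alm : alpha * m = t^+2 by rewrite alE tt.
have alL : alpha * L = 1 by rewrite alE divff // lt0r_neq0.
have P2 : forall v : R, 0 <= v <= 1 ->
    AGF_exp_stable n m L alpha (1 + (v - 2) / s) (v * s) t.
  move=> v /andP[v0 v1]; apply: suff_stable => //.
  - move=> lam /andP[ml lL].
    set mu := lam / L.
    have mut : t^+2 <= mu by rewrite tt /mu ler_pM2r // invr_gt0.
    have mu1 : mu <= 1 by rewrite /mu ler_pdivrMr // mul1r.
    have eb : 1 - (1 + (v - 2) / s) + v * s * alpha * lam = (2 - v) * t + v * mu / t.
      rewrite /mu /t /alpha; field; rewrite lt0r_neq0 //=.
      by rewrite lt0r_neq0.
    rewrite eb alE -/mu.
    have q : t <= mu / t by rewrite ler_pdivlMr // -expr2.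
    have e2 : ((2 - v) * t + v * mu / t) * t = (2 - v) * t^+2 + v * mu.
      by field; rewrite lt0r_neq0.
    rewrite mulrDl in e2 *.
    split; first nra.
    nra.
  - move=> x y e1 _.
    have xn : x < 0.
      rewrite ltNge; apply/negP => hx.
      have : 0 <= v * s * x by rewrite !mulr_ge0 // ltW.
      lra.
    have h3 : 0 <= (-x) * s * (1 - v).
      by rewrite !mulr_ge0 // ?subr_ge0 // ?oppr_ge0 ltW.
    have hx : x * s <= -1 by nra.
    by rewrite /t -mulNr ler_pdivlMr.
have P1 : forall beta gamma rho : R,
      AGF_exp_stable n m L alpha beta gamma rho -> rho <= t.
  move=> be ga rho st.
  have [r2 _] := nec_at st hQ eQm (mulr_gt0 (divr_gt0 ltr01 L0) m0).
  rewrite alm in r2; have r0 := st.1; nra.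
split; first exact: P1.
split; first exact: P2.
split.
  move=> mL' be ga st.
  have t1 : t < 1.
    have : t^+2 < 1 by rewrite tt ltr_pdivrMr // mul1r.
    nra.
  have [_ [b1 p1]] := nec_at st hQ eQm (mulr_gt0 (divr_gt0 ltr01 L0) m0).
  have [_ [b2 p2]] := nec_at st hQ eQL (mulr_gt0 (divr_gt0 ltr01 L0) L0).
  have q1 : ga * alpha * m = ga * t^+2 by rewrite -mulrA alm.
  have q2 : ga * alpha * L = ga by rewrite -mulrA alL mulr1.
  rewrite q1 alm in b1 p1; rewrite q2 alL in b2 p2.
  have e1 : 1 - be + ga * t^+2 = 2 * t by nra.
  have g0 : 0 <= ga by nra.
  have g1 : ga * t <= 1 by nra.
  exists (ga * t); split; first by rewrite g1 andbT mulr_ge0 // ltW.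
  split.
    rewrite divs; nra.
  by rewrite -mulrA ts mulr1.
split.
  have := P2 0; rewrite mul0r; apply; by rewrite lexx ler01.
move=> k4 v beta.
have s2 : 2 <= s by nra.
have k1' : 0 < kappa - 1 by nra.
have hv : 0 <= v <= 1.
  rewrite /v divr_ge0 ?subr_ge0 ?(ltW k1') //= ler_pdivrMr // mul1r; nra.
have hvs : v * s = beta.
  rewrite /beta /v; rewrite -ss; field.
  by rewrite lt0r_neq0 //= ss lt0r_neq0.
split => //; split => //.
have := P2 v hv; by rewrite hvs.
Qed.
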